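(* Let $T$ be dependent, $\kappa$ regular $>|T|$, $N\prec\mathfrak C$ $\kappa$-saturated and $q\in\mathbf S^{\mathrm{nsp},m}_{\ge\kappa}(N)$ for some $m<\omega$. Then for every $M\prec N$ with $\|M\|<\kappa$ and every formula $\varphi(\bar x,\bar y)$ with parameters from $N$, where $\ell g(\bar x)=m$ and $\bar y$ is finite, there are a formula $\psi(\bar x,\bar d)\in q$ and a function $\eta:{}^{\ell g(\bar y)}M\to\{0,1\}$ such that $$\psi(\bar x,\bar d)\vdash\{\varphi(\bar x,\bar b)^{\eta(\bar b)}:\bar b\in{}^{\ell g(\bar y)}M\}$$ (hence this set is included in $q$).
   Context: $T$ is a complete first-order theory, $\mathfrak C$ its monster model; types are computed in $\mathfrak C$. $T$ dependent means NIP. $\varphi^1=\varphi$, $\varphi^0=\neg\varphi$. A type $p$ does not split over $B$ if whenever $\varphi(\bar x,\bar b),\neg\varphi(\bar x,\bar c)\in p$ then $\mathrm{tp}(\bar b,B)\ne\mathrm{tp}(\bar c,B)$. Complete types $p(\bar x),q(\bar y)$ over $A$ are weakly orthogonal if for all $\bar a_1,\bar a_2$ realizing $p$ and $\bar b_1,\bar b_2$ realizing $q$, $\mathrm{tp}(\bar a_1{}^\frown\bar b_1,A)=\mathrm{tp}(\bar a_2{}^\frown\bar b_2,A)$. $\mathbf S^{\mathrm{nsp}}_{<\kappa}(A)$ is the set of complete types (in finitely many variables) over $A$ that do not split over some $B\subseteq A$ with $|B|<\kappa$; $\mathbf S^{\mathrm{nsp},m}_{\ge\kappa}(A)$ is the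 set of $p\in\mathbf S^m(A)$ weakly orthogonal to every $r\in\mathbf S^{\mathrm{nsp}}_{<\kappa}(A)$. *)

(* Defs.v *)
From mathcomp Require Import all_boot.

Set Implicit Arguments.
Unset Strict Implicit.
Unset Printing Implicit Defensive.

Record signature := Signature {
  fsym : Type; fary : fsym -> nat;
  rsym : Type; rary : rsym -> nat }.

Section Syntax.
Variables (L : signature) (P : Type).

Inductive term : Type :=
  | tvar of nat
  | tpar of P
  | tapp (f : fsym L) of ('I_(fary f) -> term).

(* formulas: =, relations, negation, conjunction, existential quantifier
   (binding de Bruijn variable 0) *)
Inductive formula : Type :=
  | feq of term & term
  | frel (r : rsym L) of ('I_(rary r) -> term)
  | fneg of formula
  | fand of formula & formula
  | fex of formula.

Fixpoint tbounded (n : nat) (t : term) : Prop :=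
  match t with
  | tvar i => i < n
  | tpar _ => True
  | tapp f args => forall i, tbounded n (args i)
  end.

Fixpoint bounded (n : nat) (phi : formula) : Prop :=
  match phi with
  | feq t u => tbounded n t /\ tbounded n u
  | frel r args => forall i, tbounded n (args i)
  | fneg f => bounded n f
  | fand f g => bounded n f /\ bounded n g
  | fex f => bounded n.+1 f
  end.

Fixpoint tparams_in (A : P -> Prop) (t : term) : Prop :=
  match t with
  | tvar _ => True
  | tpar a => A a
  | tapp f args => forall i, tparams_in A (args i)
  end.

Fixpoint params_in (A : P -> Prop) (phi : formula) : Prop :=
  match phi with
  | feq t u => tparams_in A t /\ tparams_in A u
  | frel r args => forall i, tparams_in A (args i)
  | fneg f => params_in A f
  | fand f g => params_in A f /\ params_in A g
  | fex f => params_in A f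
  end.

(* replace free variable j (i.e. index j + depth) by the parameter s j
   whenever s j = Some c; parameters are closed, so no shifting is needed *)
Fixpoint tinst (d : nat) (s : nat -> option P) (t : term) : term :=
  match t with
  | tvar i => if i < d then tvar i else
              match s (i - d) with Some c => tpar c | None => tvar i end
  | tpar a => tpar a
  | tapp f args => tapp (fun i => tinst d s (args i))
  end.

Fixpoint inst (d : nat) (s : nat -> option P) (phi : formula) : formula :=
  match phi with
  | feq t u => feq (tinst d s t) (tinst d s u)
  | frel r args => frel (fun i => tinst d s (args i))
  | fneg f => fneg (inst d s f)
  | fand f g => fand (inst d s f) (inst d s g)
  | fex f => fex (inst d.+1 s f)
  end.

(* phi(x_0..x_{m-1}, b) : the variables x_m, ..., x_{m+size b-1} are
   replaced by the parameters listed in b *)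
Definition inst_tail (m : nat) (b : seq P) (phi : formula) : formula :=
  inst 0 (fun n => if m <= n then onth b (n - m) else None) phi.

End Syntax.

Record structure (L : signature) := Structure {
  carrier :> Type;
  elt : carrier;                       (* structures are nonempty *)
  funs : forall f : fsym L, ('I_(fary f) -> carrier) -> carrier;
  rels : forall r : rsym L, ('I_(rary r) -> carrier) -> Prop }.

Section Semantics.
Variables (L : signature) (C : structure L).

Notation fm := (formula L (carrier C)).

Fixpoint eval (v : nat -> C) (t : term L C) : C :=
  match t with
  | tvar i => v i
  | tpar a => a
  | tapp f args => funs (fun i => eval v (args i))
  end.

Definition scons (a : C) (v : nat -> C) (n : nat) : C :=
  if n is j.+1 then v j else a.

Fixpoint sat (v : nat -> C) (phi : fm) : Prop :=
  match phi with
  | feq t u => eval v t = eval v u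
  | frel r args => rels (fun i => eval v (args i))
  | fneg f => ~ sat v f
  | fand f g => sat v f /\ sat v g
  | fex f => exists a, sat (scons a v) f
  end.

Definition satT (phi : fm) (s : seq C) : Prop := sat (fun n => nth (elt C) s n) phi.

Definition tuple_in (A : C -> Prop) (s : seq C) : Prop :=
  forall i, i < size s -> A (nth (elt C) s i).

Definition subset (A B : C -> Prop) : Prop := forall x, A x -> B x.

Definition no_params (phi : fm) : Prop := params_in (fun _ : C => False) phi.

Definition type_of (A : C -> Prop) (a : seq C) (phi : fm) : Prop :=
  params_in A phi /\ bounded (size a) phi /\ satT phi a.

Definition realizes (A : C -> Prop) (p : fm -> Prop) (a : seq C) : Prop :=
  forall phi, p phi <-> type_of A a phi.

(* p \in S^m(A): types are computed in the monster C *)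
Definition isType (A : C -> Prop) (m : nat) (p : fm -> Prop) : Prop :=
  exists a, size a = m /\ realizes A p a.

Definition eqtp (B : C -> Prop) (b c : seq C) : Prop :=
  size b = size c /\
  forall phi, params_in B phi -> bounded (size b) phi -> (satT phi b <-> satT phi c).

Definition nsplit (A : C -> Prop) (m : nat) (p : fm -> Prop) (B : C -> Prop) : Prop :=
  forall (k : nat) (phi : fm) (b c : seq C),
    no_params phi -> bounded (m + k) phi ->
    size b = k -> size c = k -> tuple_in A b -> tuple_in A c ->
    p (inst_tail m b phi) -> p (fneg (inst_tail m c phi)) ->
    ~ eqtp B b c.

Definition weakly_orth (A : C -> Prop) (p r : fm -> Prop) : Prop :=
  forall a1 a2 b1 b2, realizes A p a1 -> realizes A p a2 ->
    realizes A r b1 -> realizes A r b2 -> eqtp A (a1 ++ b1) (a2 ++ b2).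

Definition card_lt (X Y : Type) : Prop :=
  (exists f : X -> Y, injective f) /\ ~ (exists g : Y -> X, injective g).

Definition set_card_lt (A : C -> Prop) (K : Type) : Prop := card_lt {x : C | A x} K.

Definition S_nsp_lt (A : C -> Prop) (K : Type) (r : fm -> Prop) : Prop :=
  exists m, isType A m r /\
    exists B : C -> Prop, subset B A /\ set_card_lt B K /\ nsplit A m r B.

Definition S_nsp_ge (A : C -> Prop) (K : Type) (m : nat) (q : fm -> Prop) : Prop :=
  isType A m q /\ forall r, S_nsp_lt A K r -> weakly_orth A q r.

(* M is (the universe of) an elementary substructure of C
   (Tarski--Vaught test) *)
Definition elementary (M : C -> Prop) : Prop :=
  forall phi : fm, params_in M phi -> bounded 1 phi ->
    (exists a, satT phi [:: a]) -> exists a, M a /\ satT phi [:: a].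

Definition elem_sub (M N : C -> Prop) : Prop := subset M N /\ elementary M.

Definition fin_sat (Sigma : fm -> Prop) : Prop :=
  forall l : seq fm, (forall i, i < size l -> forall d, Sigma (nth d l i)) ->
    exists a, forall i, i < size l -> forall d, satT (nth d l i) [:: a].

Definition saturated_in (D : C -> Prop) (K : Type) : Prop :=
  forall A : C -> Prop, subset A D -> set_card_lt A K ->
  forall Sigma : fm -> Prop,
    (forall phi, Sigma phi -> params_in A phi /\ bounded 1 phi) ->
    fin_sat Sigma -> exists a, D a /\ forall phi, Sigma phi -> satT phi [:: a].

Definition dependent : Prop :=
  forall (phi : fm) (m k : nat), no_params phi -> bounded (m + k) phi ->
    exists n : nat, ~ exists (a : nat -> seq C) (b : (nat -> bool) -> seq C),
      (forall i, size (a i) = m) /\ (forall s, size (b s) = k) /\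
      forall (s : nat -> bool) (i : nat), i < n ->
        (satT phi (a i ++ b s) <-> s i).

End Semantics.

Definition infinite_type (K : Type) : Prop := exists f : nat -> K, injective f.

Definition regular (K : Type) : Prop :=
  infinite_type K /\
  forall (I : Type) (F : I -> K -> Prop),
    card_lt I K -> (forall i, card_lt {x : K | F i x} K) ->
    exists x : K, forall i, ~ F i x.

(* |T| = number of L-formulas *)
Definition card_T (L : signature) : Type := formula L Empty_set.

(* Main.v *)
Require Import Defs.
From mathcomp Require Import all_boot.
From Stdlib Require Import Classical ClassicalEpsilon FunctionalExtensionality ProofIrrelevance Lia.
From mathcomp Require Import zify.
Set Implicit Arguments. Unset Strict Implicit. Unset Printing Implicit Defensive.

Definition sub {L} {C : structure L} d (s : nat -> option C) (v : nat -> C) (i : nat) : C :=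
  if i < d then v i else match s (i - d) with Some c => c | None => v i end.

Lemma eval_tinst L (C : structure L) d s v (t : term L C) :
  eval v (tinst d s t) = eval (sub d s v) t.
Proof.
elim: t => [i|a|f args IH] /=.
- rewrite /sub; case: (i < d) => //. by case: (s (i-d)).
- by [].
- congr funs. apply: functional_extensionality => i. exact: IH.
Qed.

Lemma sub_scons L (C : structure L) d s v (a : C) :
  sub d.+1 s (scons a v) = scons a (sub d s v).
Proof.
apply: functional_extensionality => -[|j] //=; rewrite /sub /= ltnS subSS.
Qed.

Lemma sat_inst L (C : structure L) (phi : formula L C) : forall d s v,
  sat v (inst d s phi) <-> sat (sub d s v) phi.
Proof.
elim: phi => [t u|r args|f IH|f IHf g IHg|f IH] d s v /=.
- by rewrite !eval_tinst.
- have -> : (fun i => eval v (tinst d s (args i))) = (fun i => eval (sub d s v) (args i)).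
    by apply: functional_extensionality => i; rewrite eval_tinst.
  by [].
- by rewrite IH.
- by rewrite IHf IHg.
- split=> -[a Ha]; exists a; move: Ha; by rewrite IH sub_scons.
Qed.

Lemma eval_ext L (C : structure L) n (t : term L C) v w :
  tbounded n t -> (forall i, i < n -> v i = w i) -> eval v t = eval w t.
Proof.
elim: t => [i|a|f args IH] /= hb hvw; first exact: hvw.
- by [].
- congr funs; apply: functional_extensionality => i. exact: IH.
Qed.

Lemma sat_ext L (C : structure L) (phi : formula L C) : forall n v w,
  bounded n phi -> (forall i, i < n -> v i = w i) -> (sat v phi <-> sat w phi).
Proof.
elim: phi => [t u|r args|f IH|f IHf g IHg|f IH] n v w /= hb hvw.
- by case: hb => h1 h2; rewrite (eval_ext h1 hvw) (eval_ext h2 hvw).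
- have -> : (fun i => eval v (args i)) = (fun i => eval w (args i)) by
    apply: functional_extensionality => i; exact: eval_ext (hb i) hvw.
  by [].
- by rewrite (IH n v w hb hvw).
- by case: hb => h1 h2; rewrite (IHf n v w h1 hvw) (IHg n v w h2 hvw).
- have E a : forall i, i < n.+1 -> scons a v i = scons a w i.
    by case=> //= i hi; exact: hvw.
  split=> -[a Ha]; exists a; [by rewrite -(IH _ _ _ hb (E a))| by rewrite (IH _ _ _ hb (E a))].
Qed.

Lemma params_mono L (P : Type) (A B : P -> Prop) (phi : formula L P) :
  (forall x, A x -> B x) -> params_in A phi -> params_in B phi.
Proof.
move=> hAB.
have ht : forall t : term L P, tparams_in A t -> tparams_in B t.
  elim=> [i|a|f args IH] /=; [done|exact: hAB|move=> h i; exact: IH].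
elim: phi => [t u|r args|f IH|f IHf g IHg|f IH] /=.
- by case=> ??; split; apply: ht.
- move=> h i; exact: ht.
- exact: IH.
- by case=> ??; split; [apply: IHf|apply: IHg].
- exact: IH.
Qed.


Lemma onth_spec T (x0 : T) (b : seq T) j :
  onth b j = if j < size b then Some (nth x0 b j) else None.
Proof. elim: b j => [|x b IH] [|j] //=. Qed.

Definition tsub {P : Type} (m : nat) (b : seq P) (n : nat) : option P :=
  if m <= n then onth b (n - m) else None.

Lemma satT_inst_tail L (C : structure L) m (b a : seq C) (phi : formula L C) :
  size a = m -> (satT (inst_tail m b phi) a <-> satT phi (a ++ b)).
Proof.
move=> ha; rewrite /satT /inst_tail sat_inst.
have -> : sub 0 (fun n => if m <= n then onth b (n - m) else None) (fun n => nth (elt C) a n)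
        = (fun n => nth (elt C) (a ++ b) n); last by [].
apply: functional_extensionality => i; rewrite /sub /= subn0 nth_cat ha.
case: ltnP => hi //.
rewrite (onth_spec (elt C)); case: ifP => // /negbT; rewrite -leqNgt => hb.
by rewrite (nth_default _ hb) nth_default // ha.
Qed.

Lemma tbounded_tinst L (P : Type) m (b : seq P) (t : term L P) d :
  tbounded (d + (m + size b)) t ->
  tbounded (d + m) (tinst d (fun n => if m <= n then onth b (n - m) else None) t).
Proof.
elim: t => [i|a|f args IH] /=; last by move=> h i; exact: IH.
- move=> hi; case: ltnP => hid /=; first by rewrite ltn_addr.
  case: leqP => hm.
  + case: b hi => [|x b] hi; first by rewrite onth0n /=; rewrite /= addn0 in hi; lia.
    rewrite (onth_spec x); case: ifP => //= /negbT; rewrite -leqNgt => hh. move: hh hi => /= hh hi. lia.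
  + rewrite /=; lia.
- by intros.
Qed.

Lemma bounded_inst L (P : Type) m (b : seq P) (phi : formula L P) : forall d,
  bounded (d + (m + size b)) phi ->
  bounded (d + m) (inst d (fun n => if m <= n then onth b (n - m) else None) phi).
Proof.
elim: phi => [t u|r args|f IH|f IHf g IHg|f IH] d /=.
- by case=> ??; split; apply: tbounded_tinst.
- move=> h i; exact: tbounded_tinst.
- exact: IH.
- by case=> ??; split; [apply: IHf|apply: IHg].
- move=> h; exact: (IH d.+1).
Qed.

Lemma bounded_inst_tail L (P : Type) m (b : seq P) (phi : formula L P) :
  bounded (m + size b) phi -> bounded m (inst_tail m b phi).
Proof. exact: (bounded_inst (d:=0)). Qed.

Lemma params_inst L (P : Type) (A : P -> Prop) (s : nat -> option P) (phi : formula L P) :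
  (forall n c, s n = Some c -> A c) -> params_in A phi -> forall d, params_in A (inst d s phi).
Proof.
move=> hs.
have ht : forall d (t : term L P), tparams_in A t -> tparams_in A (tinst d s t).
  move=> d; elim=> [i|a|f args IH] /=; [|done|move=> h i; exact: IH].
  move=> _; case: (i < d) => //; case E: (s (i - d)) => [c|] //=; exact: hs E.
elim: phi => [t u|r args|f IH|f IHf g IHg|f IH] /= hp d.
- by case: hp => ??; split; apply: ht.
- move=> i; exact: ht.
- exact: IH.
- by case: hp => ??; split; [apply: IHf|apply: IHg].
- exact: IH.
Qed.

Lemma params_inst_tail L (P : Type) (A : P -> Prop) m (b : seq P) (phi : formula L P) :
  params_in A phi -> (forall x, List.In x b -> A x) -> params_in A (inst_tail m b phi).
Proof.
move=> hp hb; rewrite /inst_tail; apply: params_inst => // n c.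
case: (m <= n) => //; elim: b hb (n - m) => [|x b IH] hb [|j] //=.
- by case=> <-; apply: hb; left.
- by apply: IH => y hy; apply: hb; right.
Qed.


Fixpoint iterex {L} {P : Type} (n : nat) (phi : formula L P) : formula L P :=
  if n is n'.+1 then fex (iterex n' phi) else phi.

Lemma sat_iterex L (C : structure L) n (phi : formula L C) : forall v,
  sat v (iterex n phi) <-> exists w : seq C, size w = n /\
     sat (fun i => if i < n then nth (elt C) w i else v (i - n)) phi.
Proof.
elim: n => [|n IH] v /=.
- have E : (fun i => v (i - 0)) = v.
    by apply: functional_extensionality => i; rewrite subn0.
  rewrite E; split; [by move=> h; exists [::]| by case=> w [_ h]].
- have E : forall (w : seq C) a, size w = n ->
     (fun i => if i < n then nth (elt C) w i else scons a v (i - n))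
     = (fun i => if i < n.+1 then nth (elt C) (rcons w a) i else v (i - n.+1)).
    move=> w a hw; apply: functional_extensionality => i; rewrite nth_rcons hw.
    case: (ltngtP i n) => hin.
    + by rewrite ltnS ltnW.
    + have -> : i - n = (i - n.+1).+1 by lia.
      by rewrite /= ltnNge hin.
    + by rewrite hin subnn ltnSn.
  split.
  + case=> a /IH [w [hw h]]; exists (rcons w a); rewrite size_rcons hw; split=> //.
    by rewrite -E.
  + case=> w' [hw' h]; case/lastP: w' hw' h => [|w a]; first by [].
    rewrite size_rcons => -[hw] h; exists a; apply/IH; exists w; split=> //; by rewrite E.
Qed.

Lemma satT_iterex L (C : structure L) n (phi : formula L C) s :
  satT (iterex n phi) s <-> exists w : seq C, size w = n /\ satT phi (w ++ s).
Proof.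
rewrite /satT sat_iterex.
split=> -[w [hw h]]; exists w; split=> //; move: h;
 (have -> // : (fun i => if i < n then nth (elt C) w i else nth (elt C) s (i - n))
   = (fun i => nth (elt C) (w ++ s) i));
 apply: functional_extensionality => i; by rewrite nth_cat hw.
Qed.

Lemma bounded_iterex L (P : Type) n (phi : formula L P) : forall j,
  bounded (n + j) phi -> bounded j (iterex n phi).
Proof.
elim: n => [|n IH] j //= h; apply: IH; by rewrite addnS -addSn.
Qed.

Lemma params_iterex L (P : Type) (A : P -> Prop) n (phi : formula L P) :
  params_in A phi -> params_in A (iterex n phi).
Proof. by elim: n. Qed.

Lemma finsat_of_closed L (C : structure L) (S : formula L C -> Prop) :
  (forall phi psi, S phi -> S psi -> S (fand phi psi)) ->
  (forall phi, S phi -> exists a, satT phi [:: a]) -> fin_sat S.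
Proof.
move=> hcl hs l hl.
have : l = [::] \/ exists chi, S chi /\ forall a, satT chi [:: a] ->
          forall i, i < size l -> forall d, satT (nth d l i) [:: a].
  elim: l hl => [|phi l IH] hl; first by left.
  right. have hphi : S phi by exact: (hl 0 erefl phi).
  have hl' : forall i, i < size l -> forall d, S (nth d l i).
    by move=> i hi d; exact: (hl i.+1 hi d).
  case: (IH hl') => [->|[chi [hchi hi]]].
  + exists phi; split=> // a ha [|i] //.
  + exists (fand phi chi); split; first exact: hcl.
    by move=> a [h1 h2] [|i] //= hi' d; apply: hi.
case=> [->|[chi [hchi hi]]]; first by exists (elt C).
by case: (hs _ hchi) => a ha; exists a; apply: hi.
Qed.

Lemma realize L (C : structure L) (G : (C -> Prop) -> Prop)
  (hsat1 : forall A, G A -> forall S : formula L C -> Prop,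
      (forall phi, S phi -> params_in A phi /\ bounded 1 phi) ->
      fin_sat S -> exists a, forall phi, S phi -> satT phi [:: a])
  (hG : forall A c, G A -> G (fun x => A x \/ x = c)) n :
  forall A (S : formula L C -> Prop), G A ->
  (forall phi, S phi -> params_in A phi /\ bounded n phi) ->
  (forall phi psi, S phi -> S psi -> S (fand phi psi)) ->
  (forall phi, S phi -> exists s, size s = n /\ satT phi s) ->
  exists s, size s = n /\ forall phi, S phi -> satT phi s.
Proof.
elim: n => [|n IH] A S hA hpb hcl hsat.
  exists [::]; split=> // phi hphi; case: (hsat _ hphi) => -[|x s] [] //.
pose S1 := fun chi => params_in A chi /\ bounded 1 chi /\ exists psi, S psi /\
   forall a, satT (iterex n psi) [:: a] -> satT chi [:: a].
have [c hc] : exists c, forall chi, S1 chi -> satT chi [:: c].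
  apply: (hsat1 A hA) => [chi [? [? _]]|]; first by [].
  apply: finsat_of_closed.
  - move=> chi1 chi2 [p1 [b1 [psi1 [h1 i1]]]] [p2 [b2 [psi2 [h2 i2]]]].
    split; first by []. split; first by []. exists (fand psi1 psi2); split; first exact: hcl.
    move=> a ha; move/satT_iterex: ha => [w [hw [ha1 ha2]]]; split.
    + by apply: i1; apply/satT_iterex; exists w.
    + by apply: i2; apply/satT_iterex; exists w.
  - move=> chi [_ [_ [psi [hpsi himp]]]].
    case: (hsat _ hpsi) => s [hs h]; case/lastP: s hs h => [|w a] //.
    rewrite size_rcons => -[hw] h; exists a; apply: himp; apply/satT_iterex.
    by exists w; rewrite cats1.
have hiter : forall psi, S psi -> satT (iterex n psi) [:: c].
  move=> psi hpsi; apply: hc; case: (hpb _ hpsi) => hp hb.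
  split; first exact: params_iterex.
  split; first by apply: bounded_iterex; rewrite addn1.
  by exists psi.
pose S' := fun phi => exists psi, S psi /\ phi = inst_tail n [:: c] psi.
have [s' [hs' hS']] : exists s, size s = n /\ forall phi, S' phi -> satT phi s.
  apply: (IH (fun x => A x \/ x = c)); first exact: hG.
  - move=> phi [psi [hpsi ->]]; case: (hpb _ hpsi) => hp hb; split.
    + apply: params_inst_tail; first by apply: params_mono hp => x; left.
      by move=> x [<-|//]; right.
    + by apply: bounded_inst_tail; rewrite /= addn1.
  - move=> phi psi [p1 [h1 ->]] [p2 [h2 ->]]; exists (fand p1 p2); split=> //.
    exact: hcl.
  - move=> phi [psi [hpsi ->]]; case/satT_iterex: (hiter _ hpsi) => w [hw h].
    by exists w; split=> //; apply/satT_inst_tail.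
exists (s' ++ [:: c]); split; first by rewrite size_cat hs' addn1.
move=> phi hphi; apply/(satT_inst_tail _ _ hs'); apply: hS'; by exists phi.
Qed.


Fixpoint neqs {L} {C : structure L} (l : seq C) : formula L C :=
  if l is p :: l' then fand (fneg (feq (@tvar L C 0) (@tpar L C p))) (neqs l')
  else feq (@tvar L C 0) (@tvar L C 0).

Lemma neqs_sat L (C : structure L) (l : seq C) v :
  sat v (neqs l) <-> forall p, List.In p l -> v 0 <> p.
Proof.
elim: l => [|p l IH] /=; first by split=> // _ p [].
rewrite IH; split.
- by case=> h1 h2 q [<-|hq]; [|exact: h2].
- by move=> h; split; [move=> e; apply: (h p); [left|]| move=> q hq; apply: h; right].
Qed.

Lemma neqs_bounded L (C : structure L) (l : seq C) : bounded 1 (neqs l).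
Proof. by elim: l => [|p l IH] //=. Qed.

Lemma neqs_params L (C : structure L) (A : C -> Prop) (l : seq C) :
  (forall x, List.In x l -> A x) -> params_in A (neqs l).
Proof.
elim: l => [|p l IH] //= h; split; first by split=> //; apply: h; left.
by apply: IH => x hx; apply: h; right.
Qed.

Definition pick {L} {C : structure L} (N : C -> Prop) (l : seq C) : C :=
  match excluded_middle_informative (exists a, N a /\ ~ List.In a l) with
  | left H => proj1_sig (constructive_indefinite_description _ H)
  | right _ => elt C end.

Lemma pick_spec L (C : structure L) (N : C -> Prop) (hN : elementary N) c (hc : ~ N c)
  (l : seq C) : (forall x, List.In x l -> N x) -> N (pick N l) /\ ~ List.In (pick N l) l.
Proof.
move=> hl; rewrite /pick; case: excluded_middle_informative => H.
- by case: (constructive_indefinite_description _ H) => a /= [].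
- exfalso; apply: H.
  have hex : exists a, satT (neqs l) [:: a].
    exists c; apply/neqs_sat => p hp /= e; apply: hc; rewrite e; exact: hl.
  have [a [ha hs]] := hN (neqs l) (neqs_params hl) (neqs_bounded l) hex.
  exists a; split=> // hin; move/neqs_sat: hs => hs; exact: (hs a hin).
Qed.

Fixpoint gl {L} {C : structure L} (N : C -> Prop) (n : nat) : seq C :=
  if n is n'.+1 then pick N (gl N n') :: gl N n' else [::].

Lemma dedekind L (C : structure L) (N : C -> Prop) (hN : elementary N) c (hc : ~ N c) :
  exists g : nat -> C, (forall n, N (g n)) /\ injective g.
Proof.
have hall : forall n x, List.In x (gl N n) -> N x.
  elim=> [|n IH] x //= [<-|hx]; last exact: IH.
  by case: (pick_spec hN hc (IH)).
exists (fun n => pick N (gl N n)); split.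
  by move=> n; case: (pick_spec hN hc (hall n)).
have hin : forall i j, i < j -> List.In (pick N (gl N i)) (gl N j).
  move=> i; elim=> [|j IH] // hij /=.
  rewrite ltnS leq_eqVlt in hij; case/orP: hij => [/eqP ->|h]; [by left|right; exact: IH h].
move=> i j e; case: (ltngtP i j) => // h.
- by case: (pick_spec hN hc (hall j)) => _ hn; exfalso; apply: hn; rewrite -e; apply: hin.
- by case: (pick_spec hN hc (hall i)) => _ hn; exfalso; apply: hn; rewrite e; apply: hin.
Qed.

Lemma In_nth_ex T (x0 : T) (F : seq T) y : List.In y F -> exists j, nth x0 F j = y.
Proof.
elim: F => [|x F IH] //= [<-|h]; first by exists 0.
by case: (IH h) => j hj; exists j.+1.
Qed.

Lemma hotel L (C : structure L) (N : C -> Prop) (hN : elementary N) (F : seq C) :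
  exists H : C -> C, (forall y, N y \/ List.In y F -> N (H y)) /\
    (forall y1 y2, N y1 \/ List.In y1 F -> N y2 \/ List.In y2 F -> H y1 = H y2 -> y1 = y2).
Proof.
case: (classic (forall x, N x)) => hall.
  by exists id; split=> // y _; exact: hall.
case: (not_all_ex_not _ _ hall) => c hc.
case: (dedekind hN hc) => g [hgN hgi].
pose H := fun y => match excluded_middle_informative (N y) with
  | left _ => match excluded_middle_informative (exists j, y = g j) with
              | left P => g (2 * proj1_sig (constructive_indefinite_description _ P))
              | right _ => y end
  | right _ => match excluded_middle_informative (exists j, nth (elt C) F j = y) with
              | left P => g (2 * proj1_sig (constructive_indefinite_description _ P)).+1
              | right _ => y end end.
have spec : forall y, N y \/ List.In y F ->
   (exists j, y = g j /\ H y = g (2 * j)) \/ (N y /\ (forall j, y <> g j) /\ H y = y) \/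
   (exists j, nth (elt C) F j = y /\ H y = g (2 * j).+1).
  move=> y hy; rewrite /H; case: excluded_middle_informative => hNy.
  - case: excluded_middle_informative => P.
    + left; case: (constructive_indefinite_description _ P) => j /= hj; by exists j.
    + right; left; split=> //; split=> // j ej; apply: P; by exists j.
  - case: excluded_middle_informative => P.
    + right; right; case: (constructive_indefinite_description _ P) => j /= hj; by exists j.
    + exfalso; case: hy => // hy; apply: P; exact: In_nth_ex.
exists H; split.
- move=> y hy; case: (spec y hy) => [[j [_ ->]]|[[hNy [_ ->]]|[j [_ ->]]]] //.
- move=> y1 y2 h1 h2; case: (spec y1 h1) => [[j1 [e1 ->]]|[[hN1 [hn1 ->]]|[j1 [e1 ->]]]];
  case: (spec y2 h2) => [[j2 [e2 ->]]|[[hN2 [hn2 ->]]|[j2 [e2 ->]]]] => E.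
  + by move/hgi: E => E; rewrite e1 e2; congr g; lia.
  + by exfalso; apply: (hn2 (2 * j1)).
  + by move/hgi: E; lia.
  + by exfalso; apply: (hn1 (2 * j2)).
  + by [].
  + by exfalso; apply: (hn1 (2 * j2).+1).
  + by move/hgi: E; lia.
  + by exfalso; apply: (hn2 (2 * j1).+1).
  + by move/hgi: E => E; rewrite -e1 -e2; congr nth; lia.
Qed.

Lemma good_card L (C : structure L) (N : C -> Prop) (hN : elementary N) (Lam : Type)
  (hL : set_card_lt N Lam) (A : C -> Prop) (F : seq C) :
  (forall x, A x -> N x \/ List.In x F) -> set_card_lt A Lam.
Proof.
move=> hA; case: (hotel hN F) => H [hH1 hH2].
case: hL => [[f hf] hno].
pose h := fun x : {x | A x} => exist N (H (proj1_sig x)) (hH1 _ (hA _ (proj2_sig x))).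
have hi : injective h.
  move=> [x px] [y py] /= E.
  have exy : x = y.
    apply: hH2; [exact: (hA _ px)|exact: (hA _ py)|].
    by move: (f_equal (@proj1_sig _ _) E).
  clear E; move: py; rewrite -exy => py; congr exist; exact: proof_irrelevance.
split.
- exists (fun x => f (h x)) => x y E; exact/hi/hf.
- case=> g hg; apply: hno; exists (fun x => h (g x)) => x y E; exact/hg/hi.
Qed.


Lemma bounded_mono L (P : Type) (phi : formula L P) : forall n n',
  n <= n' -> bounded n phi -> bounded n' phi.
Proof.
have ht : forall (t : term L P) n n', n <= n' -> tbounded n t -> tbounded n' t.
  elim=> [i|a|f args IH] n n' hn /=; [lia|done|move=> h i; exact: (IH i n)].
elim: phi => [t u|r args|f IH|f IHf g IHg|f IH] n n' hn /=.
- by case=> ??; split; apply: (ht _ n).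
- move=> h i; exact: (ht _ n).
- exact: IH.
- by case=> ??; split; [apply: (IHf n)|apply: (IHg n)].
- by apply: IH.
Qed.

Lemma In_tuple L (C : structure L) (A : C -> Prop) (b : seq C) :
  tuple_in A b -> forall x, List.In x b -> A x.
Proof.
elim: b => [|y b IH] hb x //= [<-|hx]; first exact: (hb 0).
by apply: IH => // i hi; exact: (hb i.+1).
Qed.

Lemma satT_prefix L (C : structure L) (psi : formula L C) (w b : seq C) :
  bounded (size w) psi -> (satT psi (w ++ b) <-> satT psi w).
Proof.
move=> hb; apply: (sat_ext hb) => i hi; by rewrite nth_cat hi.
Qed.

Fixpoint eqsAnd {L} {C : structure L} (i : nat) (s : seq C) (psi : formula L C) : formula L C :=
  if s is c :: s' then fand (feq (@tvar L C i) (@tpar L C c)) (eqsAnd i.+1 s' psi) else psi.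

Lemma sat_eqsAnd L (C : structure L) (s : seq C) psi : forall i v,
  sat v (eqsAnd i s psi) <-> (forall j, j < size s -> v (i + j) = nth (elt C) s j) /\ sat v psi.
Proof.
elim: s => [|c s IH] i v /=; first by split=> [h|[]] //.
rewrite IH; split.
- case=> e [h1 h2]; split=> // -[|j] hj; first by rewrite addn0.
  by rewrite /= addnS -addSn h1.
- case=> h1 h2; split; first by move: (h1 0 erefl); rewrite addn0.
  split=> // j hj; move: (h1 j.+1 hj); by rewrite addnS -addSn.
Qed.

Lemma bounded_eqsAnd L (C : structure L) (s : seq C) psi n : forall i,
  i + size s <= n -> bounded n psi -> bounded n (eqsAnd i s psi).
Proof.
elim: s => [|c s IH] i //= hi hb; split; first by split=> //; lia.
apply: IH => //; lia.
Qed.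

Lemma params_eqsAnd L (C : structure L) (A : C -> Prop) (s : seq C) psi : forall i,
  (forall x, List.In x s -> A x) -> params_in A psi -> params_in A (eqsAnd i s psi).
Proof.
elim: s => [|c s IH] i //= hs hp; split; first by split=> //; apply: hs; left.
by apply: IH => // x hx; apply: hs; right.
Qed.

Lemma satT_headinst L (C : structure L) (s b : seq C) psi :
  satT (iterex (size s) (eqsAnd 0 s psi)) b <-> satT psi (s ++ b).
Proof.
rewrite satT_iterex; split.
- case=> w [hw]; rewrite /satT sat_eqsAnd => -[h1 h2].
  have -> : s = w; last by [].
  apply: (@eq_from_nth _ (elt C)); first by rewrite hw.
  move=> j hj; rewrite -h1 // nth_cat; by rewrite hw hj.
- move=> h; exists s; split=> //; rewrite /satT sat_eqsAnd; split=> // j hj.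
  by rewrite nth_cat hj.
Qed.


Lemma satT_fand L (C : structure L) (x y : formula L C) s :
  satT (fand x y) s <-> satT x s /\ satT y s.
Proof. by []. Qed.

Theorem claim1p11
  (L : signature) (C : structure L)
  (* T = Th(C) is dependent *)
  (hdep : dependent C)
  (* kappa (= |K|) regular, > |T| *)
  (K : Type) (hreg : regular K) (hT : card_lt (card_T L) K)
  (* N \prec C, kappa-saturated; C is a monster over N *)
  (N : C -> Prop) (hN : elem_sub N (fun _ : C => True))
  (hmon : exists Lam : Type, set_card_lt N Lam /\ saturated_in (fun _ : C => True) Lam)
  (hsat : saturated_in N K)
  (m : nat) (q : formula L C -> Prop) (hq : S_nsp_ge N K m q) :
  forall M : C -> Prop, elem_sub M N -> set_card_lt M K ->
  forall (k : nat) (phi : formula L C), params_in N phi -> bounded (m + k) phi ->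
  exists (psi : formula L C) (eta : seq C -> bool),
    q psi /\
    (* psi(x,d) |- { phi(x,b)^{eta(b)} : b \in M^k } *)
    (forall a : seq C, size a = m -> satT psi a ->
       forall b : seq C, size b = k -> tuple_in M b ->
         (satT phi (a ++ b) <-> eta b)) /\
    (* hence this set is included in q *)
    (forall b : seq C, size b = k -> tuple_in M b ->
       q (if eta b then inst_tail m b phi else fneg (inst_tail m b phi))).
Proof.
move=> M hM hMK k phi hphiN hphib.
case: hq => [[a [ha hreal]] hwo].
case: hmon => Lam [hNL hCsat].
have hNel : elementary N := hN.2.
have hMN : Defs.subset M N := hM.1.
pose eta := fun b : seq C => if excluded_middle_informative (satT phi (a ++ b)) then true else false.
have etaE : forall b, eta b <-> satT phi (a ++ b).
  by move=> b; rewrite /eta; case: excluded_middle_informative.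
have qE : forall psi, q psi -> params_in N psi /\ bounded m psi /\ satT psi a.
  by move=> psi /hreal; rewrite /type_of ha.
have qI : forall psi, params_in N psi -> bounded m psi -> satT psi a -> q psi.
  by move=> psi h1 h2 h3; apply/hreal; rewrite /type_of ha.
have third : forall b, size b = k -> tuple_in M b ->
    q (if eta b then inst_tail m b phi else fneg (inst_tail m b phi)).
  move=> b hb hbM.
  have hp : params_in N (inst_tail m b phi).
    apply: params_inst_tail => // x hx; apply: hMN; exact: (In_tuple hbM).
  have hbd : bounded m (inst_tail m b phi) by apply: bounded_inst_tail; rewrite hb.
  have := etaE b; case: (eta b) => he; apply: qI => //=.
  - by apply/(satT_inst_tail _ _ ha); apply/he.
  - by move/(satT_inst_tail _ _ ha)/he.
case: (classic (exists psi, q psi /\ forall a', size a' = m -> satT psi a' ->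
   forall b, size b = k -> tuple_in M b -> (satT phi (a' ++ b) <-> eta b)))
  => [[psi [hpsi H]]|Hno].
  by exists psi, eta; split; [|split].
exfalso.
have Hw : forall psi, q psi -> exists a' b, size a' = m /\ satT psi a' /\ size b = k /\
    tuple_in M b /\ ~ (satT phi (a' ++ b) <-> satT phi (a ++ b)).
  move=> psi hpsi; apply: NNPP => hn; apply: Hno; exists psi; split=> // a' ha' hs b hb hbM.
  rewrite etaE; apply: NNPP => hne; apply: hn; by exists a', b.
pose G := fun A : C -> Prop => exists F : seq C, forall x, A x -> N x \/ List.In x F.
have hsat1 : forall A, G A -> forall S : formula L C -> Prop,
      (forall phi, S phi -> params_in A phi /\ bounded 1 phi) ->
      fin_sat S -> exists a, forall phi, S phi -> satT phi [:: a].
  move=> A [F hF] S hS hfin.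
  have [x [_ hx]] := hCsat A (fun _ _ => I) (good_card hNel hNL hF) S hS hfin.
  by exists x.
have hG : forall A c, G A -> G (fun x => A x \/ x = c).
  move=> A c [F hF]; exists (c :: F) => x [/hF [h|h]|->].
  + by left. + by right; right. + by right; left.
pose theta := fun psi => fand (iterex m (fand psi phi)) (iterex m (fand psi (fneg phi))).
have thetaE : forall psi b, bounded m psi -> (satT (theta psi) b <->
    (exists w, size w = m /\ satT psi w /\ satT phi (w ++ b)) /\
    (exists w, size w = m /\ satT psi w /\ ~ satT phi (w ++ b))).
  move=> psi b hb.
  have hpre : forall w, size w = m -> (satT psi (w ++ b) <-> satT psi w).
    by move=> w hw; apply: satT_prefix; rewrite hw.
  rewrite /theta satT_fand !satT_iterex.
  split=> -[[w1 [hw1 [h1 h1']]] [w2 [hw2 [h2 h2']]]]; split.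
  - by exists w1; split=> //; split=> //; apply/hpre.
  - by exists w2; split=> //; split=> //; apply/hpre.
  - by exists w1; split=> //; split=> //; apply/hpre.
  - by exists w2; split=> //; split=> //; apply/hpre.
pose psi0 : formula L C := fex (feq (@tvar L C 0) (@tvar L C 0)).
have hpsi0 : q psi0.
  apply: qI => //.
  by rewrite /psi0 /satT /=; exists (elt C).
pose Q := fun zeta => params_in N zeta /\ bounded k zeta /\ exists psi, q psi /\
   forall s, size s = k -> tuple_in M s -> satT (theta psi) s -> satT zeta s.
have [bs [hbs hQ]] : exists s, size s = k /\ forall zeta, Q zeta -> satT zeta s.
  apply: (realize hsat1 hG (A:=N)); first by exists [::] => x hx; left.
  - by move=> zeta [h1 [h2 _]].
  - move=> z1 z2 [p1 [b1 [psi1 [hq1 i1]]]] [p2 [b2 [psi2 [hq2 i2]]]].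
    split; first by []. split; first by [].
    have [hp1 [hb1 _]] := qE _ hq1; have [hp2 [hb2 _]] := qE _ hq2.
    exists (fand psi1 psi2); split; first by apply: qI; [exact: (conj hp1 hp2)|exact: (conj hb1 hb2)|exact: (conj (qE _ hq1).2.2 (qE _ hq2).2.2)].
    move=> s hs hsM /thetaE; case; first by split.
    move=> [w1 [hw1 [[h1 h1'] h1'']]] [w2 [hw2 [[h2 h2'] h2'']]]; split.
    + apply: i1 => //; apply/thetaE => //; split; [exists w1|exists w2]; by [].
    + apply: i2 => //; apply/thetaE => //; split; [exists w1|exists w2]; by [].
  - move=> zeta [_ [_ [psi [hpsi himp]]]].
    have [hp [hb hsa]] := qE _ hpsi.
    have [a' [b [ha' [hsa' [hb' [hbM hne]]]]]] := Hw psi hpsi.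
    exists b; split=> //; apply: himp => //; apply/thetaE => //.
    case: (classic (satT phi (a' ++ b))) => hph.
    + split; first by exists a'.
      exists a; split=> //; split=> // hh; apply: hne; tauto.
    + split; last by exists a'.
      exists a; split=> //; split=> //; apply: NNPP => hh; apply: hne; tauto.
have fs : forall chi, params_in N chi -> bounded k chi -> satT chi bs ->
    exists s, size s = k /\ tuple_in M s /\ satT chi s.
  move=> chi hp hb hs; apply: NNPP => hn.
  have : satT (fneg chi) bs.
    apply: hQ; split=> //; split=> //; exists psi0; split=> // s hsk hsM _ hcs.
    apply: hn; by exists s.
  by [].
have thetabs : forall psi, q psi -> satT (theta psi) bs.
  move=> psi hpsi; have [hp [hb _]] := qE _ hpsi; apply: hQ.
  have hb' : bounded (m + k) psi by apply: (bounded_mono (n:=m)) => //; exact: leq_addr.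
  split; first by split; apply: params_iterex.
  split; first by split; apply: bounded_iterex.
  by exists psi; split.
pose N' := fun x => N x \/ List.In x bs.
have hphiN' : params_in N' (inst_tail m bs phi).
  apply: params_inst_tail; first by apply: params_mono hphiN => x; left.
  by move=> x hx; right.
have hphib' : bounded m (inst_tail m bs phi) by apply: bounded_inst_tail; rewrite hbs.
have stage2 : forall e : bool, exists ae, size ae = m /\ (forall psi, q psi -> satT psi ae) /\
    satT (if e then inst_tail m bs phi else fneg (inst_tail m bs phi)) ae.
  move=> e.
  pose Q2 := fun zeta => params_in N' zeta /\ bounded m zeta /\ exists psi, q psi /\
    forall s, size s = m -> satT psi s ->
      satT (if e then inst_tail m bs phi else fneg (inst_tail m bs phi)) s -> satT zeta s.
  have [ae [hae hQ2]] : exists s, size s = m /\ forall zeta, Q2 zeta -> satT zeta s.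
    apply: (realize hsat1 hG (A:=N')); first by exists bs.
    - by move=> zeta [h1 [h2 _]].
    - move=> z1 z2 [p1 [b1 [psi1 [hq1 i1]]]] [p2 [b2 [psi2 [hq2 i2]]]].
      split; first by []. split; first by [].
      have [hp1 [hb1 hs1]] := qE _ hq1; have [hp2 [hb2 hs2]] := qE _ hq2.
      exists (fand psi1 psi2); split; first by apply: qI.
      move=> s hs [h1 h2] h3; split; [exact: i1|exact: i2].
    - move=> zeta [_ [_ [psi [hpsi himp]]]].
      have [hp [hb hsa]] := qE _ hpsi.
      have /thetaE := thetabs psi hpsi; case=> // -[w1 [hw1 [h1 h1']]] [w2 [hw2 [h2 h2']]].
      clear Q2; case: e himp => himp.
      + exists w1; split=> //; apply: himp => //; exact/(satT_inst_tail _ _ hw1).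
      + exists w2; split=> //; apply: himp => //; by move/(satT_inst_tail _ _ hw2).
  exists ae; split=> //; split.
  - move=> psi hpsi; have [hp [hb _]] := qE _ hpsi; apply: hQ2.
    split; first by apply: params_mono hp => x; left.
    split=> //; exists psi; by split.
  - apply: hQ2; split; first by clear Q2; case: e.
    split; first by clear Q2; case: e.
    exists psi0; split=> // s _ _ h; exact: h.
have realq : forall ae, size ae = m -> (forall psi, q psi -> satT psi ae) -> realizes N q ae.
  move=> ae hae hall psi; split.
  - move=> hpsi; have [hp [hb _]] := qE _ hpsi; rewrite /type_of hae; split=> //; split=> //.
    exact: hall.
  - rewrite /type_of hae => -[hp [hb hs]]; apply: NNPP => hn.
    have : q (fneg psi).
      apply: (qI (fneg psi)) => //= hsa; apply: hn; exact: qI.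
    by move/hall.
pose r := type_of N bs.
have hr : S_nsp_lt N K r.
  exists k; split; first by exists bs; split=> //; rewrite /realizes.
  exists M; split=> //; split=> //.
  move=> k' phi0 b c hnp hb0 hb hc hbN hcN hr1 hr2 heq.
  case: hr1 => hp1 [hbd1 hs1]; case: hr2 => hp2 [hbd2 hs2].
  rewrite hbs in hbd1 hbd2.
  have [s [hs [hsM hss]]] := fs (fand (inst_tail k b phi0) (fneg (inst_tail k c phi0)))
     (conj hp1 hp2) (conj hbd1 hbd2) (conj hs1 hs2).
  case: hss => hsb hsc.
  move/(satT_inst_tail _ _ hs): hsb => hsb.
  have hsc' : ~ satT phi0 (s ++ c) by move=> h; apply: hsc; apply/(satT_inst_tail _ _ hs).
  case: heq => hsz heq.
  have := heq (iterex (size s) (eqsAnd 0 s phi0)).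
  rewrite !satT_headinst => h; apply: hsc'; apply/h => //.
  - apply: params_iterex; apply: params_eqsAnd; first exact: In_tuple hsM.
    by apply: params_mono hnp.
  - apply: bounded_iterex; apply: bounded_eqsAnd; first by rewrite add0n leq_addr.
    by rewrite hs hb.
have [a1 [ha1 [hq1 hs1]]] := stage2 true.
have [a2 [ha2 [hq2 hs2]]] := stage2 false.
have := hwo r hr a1 a2 bs bs (realq _ ha1 hq1) (realq _ ha2 hq2)
   (fun _ => iff_refl _) (fun _ => iff_refl _).
case=> _ heq.
have := heq phi hphiN; rewrite size_cat ha1 hbs => /(_ hphib) h.
move/(satT_inst_tail _ _ ha1): hs1 => hs1.
apply: hs2; apply/(satT_inst_tail _ _ ha2); exact/h.
Qed.
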